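(* Assume $0<A,B\le1$ and $B\ge B_0(A)$. Put $C=2+AB-A^2$, $\sigma=\sqrt{2(1+AB)}$, $x_*=\frac{\sigma}{2BC}$ and $U_*=P-x_*$. Then $U_*\ge\frac12$, and if $U_*<R(A,B)$ then $G_{A,B}(U_* )\ge 0$.
   Context: For $0<A,B\le1$ put $\kappa=\sqrt{1-A^2}$, $\varepsilon=\sqrt{1-B^2}$, $P=P(A,B)=\frac{1+AB}{B(A+B)}$, $M(U)=\kappa(P-U)$, $N(U)=\varepsilon\left(U+\frac{\kappa^2}{A(A+B)}\right)$, and $G_{A,B}(U)=B\cos(\pi M(U))-A\cos(\pi N(U))-(A+B)\cos(\pi U)$. Further $R(A,B)=\frac{1-\varepsilon\kappa^2/[A(A+B)]}{1+\varepsilon}$ and $B_0(A)=\frac{-A(1-\kappa)+\sqrt{A^2(1-\kappa)^2+8\kappa(1+\kappa)}}{2(1+\kappa)}$. *)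

(* Defs.v *)
From Stdlib Require Import Reals.
Open Scope R_scope.

Definition kappa (A : R) : R := sqrt (1 - A^2).
Definition eps (B : R) : R := sqrt (1 - B^2).
Definition Pf (A B : R) : R := (1 + A*B) / (B * (A + B)).
Definition Mf (A B U : R) : R := kappa A * (Pf A B - U).
Definition Nf (A B U : R) : R := eps B * (U + (kappa A)^2 / (A * (A + B))).
Definition G (A B U : R) : R :=
  B * cos (PI * Mf A B U) - A * cos (PI * Nf A B U) - (A + B) * cos (PI * U).
Definition Rf (A B : R) : R :=
  (1 - eps B * (kappa A)^2 / (A * (A + B))) / (1 + eps B).
Definition B0 (A : R) : R :=
  (- A * (1 - kappa A) + sqrt (A^2 * (1 - kappa A)^2 + 8 * kappa A * (1 + kappa A)))
  / (2 * (1 + kappa A)).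

(* Main.v *)
Require Import Defs.
From Stdlib Require Import Reals Lra Psatz.
Open Scope R_scope.

Lemma PI_ub : PI <= 68/21.
Proof.
  destruct (PI_2_3_7_ineq 0) as [_ H].
  unfold sum_f_R0, tg_alt, PI_2_3_7_tg, Ratan_seq in H. simpl in H. lra.
Qed.
Lemma PI_lb : 3 <= PI.
Proof. pose proof PI2_3_2; lra. Qed.
Lemma INR_fact_eq (n m : nat) (z : Z) : Factorial.fact n = m -> Z.of_nat m = z -> INR (Factorial.fact n) = IZR z.
Proof. intros -> <-. apply INR_IZR_INZ. Qed.
Lemma cos_ge (a : R) : 0 <= a <= 2 -> a <= PI/2 -> 1 - a^2/2 <= cos a.
Proof.
  intros Ha Hb. destruct (COS a) as [H _]; [pose proof PI_RGT_0; lra| lra |].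
  unfold cos_lb, cos_approx in H. cbn [sum_f_R0] in H. unfold cos_term in H.
  rewrite (INR_fact_eq (2*0) 1 1), (INR_fact_eq (2*1) 2 2), (INR_fact_eq (2*2) 24 24),
    (INR_fact_eq (2*3) 720 720) in H by reflexivity.
  simpl in H. assert (0 <= a^4/24 - a^6/720).
  { assert (0 <= a^4) by (apply pow_le; lra). assert (0 <= a^4 * (30 - a^2)) by (apply Rmult_le_pos; nra). nra. }
  lra.
Qed.
Lemma sin_ge (a : R) : 0 <= a <= 2 -> a <= PI -> a - a^3/6 <= sin a.
Proof.
  intros Ha Hb. destruct (SIN a) as [H _]; [lra| lra |].
  unfold sin_lb, sin_approx in H. cbn [sum_f_R0] in H. unfold sin_term in H.
  rewrite (INR_fact_eq (2*0+1) 1 1), (INR_fact_eq (2*1+1) 6 6), (INR_fact_eq (2*2+1) 120 120),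
    (INR_fact_eq (2*3+1) 5040 5040) in H by reflexivity.
  simpl in H. assert (0 <= a^5/120 - a^7/5040).
  { assert (0 <= a^5) by (apply pow_le; lra). assert (0 <= a^5 * (42 - a^2)) by (apply Rmult_le_pos; nra). nra. }
  lra.
Qed.
Lemma La0 (x y : R) : 0 <= x <= 1 -> 0 <= y <= 1 ->
  2*(2+x*y-x^2)*(2+x*y-y^2)-(3+x*y)*(x+y) >= 0.
Proof. intros Hx Hy.
assert (0 <= x^0*(1-x)^3*y^0*(1-y)^3) by (apply Rmult_le_pos; [apply Rmult_le_pos; [apply Rmult_le_pos|]|]; apply pow_le; lra).
assert (0 <= x^0*(1-x)^3*y^1*(1-y)^2) by (apply Rmult_le_pos; [apply Rmult_le_pos; [apply Rmult_le_pos|]|]; apply pow_le; lra).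
assert (0 <= x^0*(1-x)^3*y^2*(1-y)^1) by (apply Rmult_le_pos; [apply Rmult_le_pos; [apply Rmult_le_pos|]|]; apply pow_le; lra).
assert (0 <= x^0*(1-x)^3*y^3*(1-y)^0) by (apply Rmult_le_pos; [apply Rmult_le_pos; [apply Rmult_le_pos|]|]; apply pow_le; lra).
assert (0 <= x^1*(1-x)^2*y^0*(1-y)^3) by (apply Rmult_le_pos; [apply Rmult_le_pos; [apply Rmult_le_pos|]|]; apply pow_le; lra).
assert (0 <= x^1*(1-x)^2*y^1*(1-y)^2) by (apply Rmult_le_pos; [apply Rmult_le_pos; [apply Rmult_le_pos|]|]; apply pow_le; lra).
assert (0 <= x^1*(1-x)^2*y^2*(1-y)^1) by (apply Rmult_le_pos; [apply Rmult_le_pos; [apply Rmult_le_pos|]|]; apply pow_le; lra).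
assert (0 <= x^1*(1-x)^2*y^3*(1-y)^0) by (apply Rmult_le_pos; [apply Rmult_le_pos; [apply Rmult_le_pos|]|]; apply pow_le; lra).
assert (0 <= x^2*(1-x)^1*y^0*(1-y)^3) by (apply Rmult_le_pos; [apply Rmult_le_pos; [apply Rmult_le_pos|]|]; apply pow_le; lra).
assert (0 <= x^2*(1-x)^1*y^1*(1-y)^2) by (apply Rmult_le_pos; [apply Rmult_le_pos; [apply Rmult_le_pos|]|]; apply pow_le; lra).
assert (0 <= x^2*(1-x)^1*y^2*(1-y)^1) by (apply Rmult_le_pos; [apply Rmult_le_pos; [apply Rmult_le_pos|]|]; apply pow_le; lra).
assert (0 <= x^2*(1-x)^1*y^3*(1-y)^0) by (apply Rmult_le_pos; [apply Rmult_le_pos; [apply Rmult_le_pos|]|]; apply pow_le; lra).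
assert (0 <= x^3*(1-x)^0*y^0*(1-y)^3) by (apply Rmult_le_pos; [apply Rmult_le_pos; [apply Rmult_le_pos|]|]; apply pow_le; lra).
assert (0 <= x^3*(1-x)^0*y^1*(1-y)^2) by (apply Rmult_le_pos; [apply Rmult_le_pos; [apply Rmult_le_pos|]|]; apply pow_le; lra).
assert (0 <= x^3*(1-x)^0*y^2*(1-y)^1) by (apply Rmult_le_pos; [apply Rmult_le_pos; [apply Rmult_le_pos|]|]; apply pow_le; lra).
lra. Qed.
Lemma Lb0 (x y : R) : 0 <= x <= 1 -> 0 <= y <= 1 ->
  4*y*(2+x*y-x^2)^2*(y-x)-21/2*(1-x^2)*(1+x*y)+171/64*(2+x*y-x^2)*(2*(2+x*y-x^2)*(2+x*y-y^2)-(3+x*y)*(x+y)) >= 0.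
Proof. intros Hx Hy.
assert (0 <= x^0*(1-x)^5*y^0*(1-y)^4) by (apply Rmult_le_pos; [apply Rmult_le_pos; [apply Rmult_le_pos|]|]; apply pow_le; lra).
assert (0 <= x^0*(1-x)^5*y^1*(1-y)^3) by (apply Rmult_le_pos; [apply Rmult_le_pos; [apply Rmult_le_pos|]|]; apply pow_le; lra).
assert (0 <= x^0*(1-x)^5*y^2*(1-y)^2) by (apply Rmult_le_pos; [apply Rmult_le_pos; [apply Rmult_le_pos|]|]; apply pow_le; lra).
assert (0 <= x^0*(1-x)^5*y^3*(1-y)^1) by (apply Rmult_le_pos; [apply Rmult_le_pos; [apply Rmult_le_pos|]|]; apply pow_le; lra).
assert (0 <= x^0*(1-x)^5*y^4*(1-y)^0) by (apply Rmult_le_pos; [apply Rmult_le_pos; [apply Rmult_le_pos|]|]; apply pow_le; lra).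
assert (0 <= x^1*(1-x)^4*y^0*(1-y)^4) by (apply Rmult_le_pos; [apply Rmult_le_pos; [apply Rmult_le_pos|]|]; apply pow_le; lra).
assert (0 <= x^1*(1-x)^4*y^1*(1-y)^3) by (apply Rmult_le_pos; [apply Rmult_le_pos; [apply Rmult_le_pos|]|]; apply pow_le; lra).
assert (0 <= x^1*(1-x)^4*y^2*(1-y)^2) by (apply Rmult_le_pos; [apply Rmult_le_pos; [apply Rmult_le_pos|]|]; apply pow_le; lra).
assert (0 <= x^1*(1-x)^4*y^3*(1-y)^1) by (apply Rmult_le_pos; [apply Rmult_le_pos; [apply Rmult_le_pos|]|]; apply pow_le; lra).
assert (0 <= x^1*(1-x)^4*y^4*(1-y)^0) by (apply Rmult_le_pos; [apply Rmult_le_pos; [apply Rmult_le_pos|]|]; apply pow_le; lra).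
assert (0 <= x^2*(1-x)^3*y^0*(1-y)^4) by (apply Rmult_le_pos; [apply Rmult_le_pos; [apply Rmult_le_pos|]|]; apply pow_le; lra).
assert (0 <= x^2*(1-x)^3*y^1*(1-y)^3) by (apply Rmult_le_pos; [apply Rmult_le_pos; [apply Rmult_le_pos|]|]; apply pow_le; lra).
assert (0 <= x^2*(1-x)^3*y^2*(1-y)^2) by (apply Rmult_le_pos; [apply Rmult_le_pos; [apply Rmult_le_pos|]|]; apply pow_le; lra).
assert (0 <= x^2*(1-x)^3*y^3*(1-y)^1) by (apply Rmult_le_pos; [apply Rmult_le_pos; [apply Rmult_le_pos|]|]; apply pow_le; lra).
assert (0 <= x^2*(1-x)^3*y^4*(1-y)^0) by (apply Rmult_le_pos; [apply Rmult_le_pos; [apply Rmult_le_pos|]|]; apply pow_le; lra).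
assert (0 <= x^3*(1-x)^2*y^0*(1-y)^4) by (apply Rmult_le_pos; [apply Rmult_le_pos; [apply Rmult_le_pos|]|]; apply pow_le; lra).
assert (0 <= x^3*(1-x)^2*y^1*(1-y)^3) by (apply Rmult_le_pos; [apply Rmult_le_pos; [apply Rmult_le_pos|]|]; apply pow_le; lra).
assert (0 <= x^3*(1-x)^2*y^2*(1-y)^2) by (apply Rmult_le_pos; [apply Rmult_le_pos; [apply Rmult_le_pos|]|]; apply pow_le; lra).
assert (0 <= x^3*(1-x)^2*y^3*(1-y)^1) by (apply Rmult_le_pos; [apply Rmult_le_pos; [apply Rmult_le_pos|]|]; apply pow_le; lra).
assert (0 <= x^3*(1-x)^2*y^4*(1-y)^0) by (apply Rmult_le_pos; [apply Rmult_le_pos; [apply Rmult_le_pos|]|]; apply pow_le; lra).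
assert (0 <= x^4*(1-x)^1*y^0*(1-y)^4) by (apply Rmult_le_pos; [apply Rmult_le_pos; [apply Rmult_le_pos|]|]; apply pow_le; lra).
assert (0 <= x^4*(1-x)^1*y^1*(1-y)^3) by (apply Rmult_le_pos; [apply Rmult_le_pos; [apply Rmult_le_pos|]|]; apply pow_le; lra).
assert (0 <= x^4*(1-x)^1*y^2*(1-y)^2) by (apply Rmult_le_pos; [apply Rmult_le_pos; [apply Rmult_le_pos|]|]; apply pow_le; lra).
assert (0 <= x^4*(1-x)^1*y^3*(1-y)^1) by (apply Rmult_le_pos; [apply Rmult_le_pos; [apply Rmult_le_pos|]|]; apply pow_le; lra).
assert (0 <= x^4*(1-x)^1*y^4*(1-y)^0) by (apply Rmult_le_pos; [apply Rmult_le_pos; [apply Rmult_le_pos|]|]; apply pow_le; lra).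
assert (0 <= x^5*(1-x)^0*y^0*(1-y)^4) by (apply Rmult_le_pos; [apply Rmult_le_pos; [apply Rmult_le_pos|]|]; apply pow_le; lra).
assert (0 <= x^5*(1-x)^0*y^1*(1-y)^3) by (apply Rmult_le_pos; [apply Rmult_le_pos; [apply Rmult_le_pos|]|]; apply pow_le; lra).
assert (0 <= x^5*(1-x)^0*y^2*(1-y)^2) by (apply Rmult_le_pos; [apply Rmult_le_pos; [apply Rmult_le_pos|]|]; apply pow_le; lra).
assert (0 <= x^5*(1-x)^0*y^3*(1-y)^1) by (apply Rmult_le_pos; [apply Rmult_le_pos; [apply Rmult_le_pos|]|]; apply pow_le; lra).
lra. Qed.
Lemma LE0 (x y : R) : 0 <= x <= 1 -> 0 <= y <= 1 ->
  4*(2+x*(19/50*y)-x^2)^2*(1-(19/50*y)^2)^2-2*(1+x*(19/50*y))*(x+(19/50*y))^2 >= 0.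
Proof. intros Hx Hy.
assert (0 <= x^0*(1-x)^4*y^0*(1-y)^6) by (apply Rmult_le_pos; [apply Rmult_le_pos; [apply Rmult_le_pos|]|]; apply pow_le; lra).
assert (0 <= x^0*(1-x)^4*y^1*(1-y)^5) by (apply Rmult_le_pos; [apply Rmult_le_pos; [apply Rmult_le_pos|]|]; apply pow_le; lra).
assert (0 <= x^0*(1-x)^4*y^2*(1-y)^4) by (apply Rmult_le_pos; [apply Rmult_le_pos; [apply Rmult_le_pos|]|]; apply pow_le; lra).
assert (0 <= x^0*(1-x)^4*y^3*(1-y)^3) by (apply Rmult_le_pos; [apply Rmult_le_pos; [apply Rmult_le_pos|]|]; apply pow_le; lra).
assert (0 <= x^0*(1-x)^4*y^4*(1-y)^2) by (apply Rmult_le_pos; [apply Rmult_le_pos; [apply Rmult_le_pos|]|]; apply pow_le; lra).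
assert (0 <= x^0*(1-x)^4*y^5*(1-y)^1) by (apply Rmult_le_pos; [apply Rmult_le_pos; [apply Rmult_le_pos|]|]; apply pow_le; lra).
assert (0 <= x^0*(1-x)^4*y^6*(1-y)^0) by (apply Rmult_le_pos; [apply Rmult_le_pos; [apply Rmult_le_pos|]|]; apply pow_le; lra).
assert (0 <= x^1*(1-x)^3*y^0*(1-y)^6) by (apply Rmult_le_pos; [apply Rmult_le_pos; [apply Rmult_le_pos|]|]; apply pow_le; lra).
assert (0 <= x^1*(1-x)^3*y^1*(1-y)^5) by (apply Rmult_le_pos; [apply Rmult_le_pos; [apply Rmult_le_pos|]|]; apply pow_le; lra).
assert (0 <= x^1*(1-x)^3*y^2*(1-y)^4) by (apply Rmult_le_pos; [apply Rmult_le_pos; [apply Rmult_le_pos|]|]; apply pow_le; lra).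
assert (0 <= x^1*(1-x)^3*y^3*(1-y)^3) by (apply Rmult_le_pos; [apply Rmult_le_pos; [apply Rmult_le_pos|]|]; apply pow_le; lra).
assert (0 <= x^1*(1-x)^3*y^4*(1-y)^2) by (apply Rmult_le_pos; [apply Rmult_le_pos; [apply Rmult_le_pos|]|]; apply pow_le; lra).
assert (0 <= x^1*(1-x)^3*y^5*(1-y)^1) by (apply Rmult_le_pos; [apply Rmult_le_pos; [apply Rmult_le_pos|]|]; apply pow_le; lra).
assert (0 <= x^1*(1-x)^3*y^6*(1-y)^0) by (apply Rmult_le_pos; [apply Rmult_le_pos; [apply Rmult_le_pos|]|]; apply pow_le; lra).
assert (0 <= x^2*(1-x)^2*y^0*(1-y)^6) by (apply Rmult_le_pos; [apply Rmult_le_pos; [apply Rmult_le_pos|]|]; apply pow_le; lra).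
assert (0 <= x^2*(1-x)^2*y^1*(1-y)^5) by (apply Rmult_le_pos; [apply Rmult_le_pos; [apply Rmult_le_pos|]|]; apply pow_le; lra).
assert (0 <= x^2*(1-x)^2*y^2*(1-y)^4) by (apply Rmult_le_pos; [apply Rmult_le_pos; [apply Rmult_le_pos|]|]; apply pow_le; lra).
assert (0 <= x^2*(1-x)^2*y^3*(1-y)^3) by (apply Rmult_le_pos; [apply Rmult_le_pos; [apply Rmult_le_pos|]|]; apply pow_le; lra).
assert (0 <= x^2*(1-x)^2*y^4*(1-y)^2) by (apply Rmult_le_pos; [apply Rmult_le_pos; [apply Rmult_le_pos|]|]; apply pow_le; lra).
assert (0 <= x^2*(1-x)^2*y^5*(1-y)^1) by (apply Rmult_le_pos; [apply Rmult_le_pos; [apply Rmult_le_pos|]|]; apply pow_le; lra).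
assert (0 <= x^2*(1-x)^2*y^6*(1-y)^0) by (apply Rmult_le_pos; [apply Rmult_le_pos; [apply Rmult_le_pos|]|]; apply pow_le; lra).
assert (0 <= x^3*(1-x)^1*y^0*(1-y)^6) by (apply Rmult_le_pos; [apply Rmult_le_pos; [apply Rmult_le_pos|]|]; apply pow_le; lra).
assert (0 <= x^3*(1-x)^1*y^1*(1-y)^5) by (apply Rmult_le_pos; [apply Rmult_le_pos; [apply Rmult_le_pos|]|]; apply pow_le; lra).
assert (0 <= x^3*(1-x)^1*y^2*(1-y)^4) by (apply Rmult_le_pos; [apply Rmult_le_pos; [apply Rmult_le_pos|]|]; apply pow_le; lra).
assert (0 <= x^3*(1-x)^1*y^3*(1-y)^3) by (apply Rmult_le_pos; [apply Rmult_le_pos; [apply Rmult_le_pos|]|]; apply pow_le; lra).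
assert (0 <= x^3*(1-x)^1*y^4*(1-y)^2) by (apply Rmult_le_pos; [apply Rmult_le_pos; [apply Rmult_le_pos|]|]; apply pow_le; lra).
assert (0 <= x^3*(1-x)^1*y^5*(1-y)^1) by (apply Rmult_le_pos; [apply Rmult_le_pos; [apply Rmult_le_pos|]|]; apply pow_le; lra).
assert (0 <= x^3*(1-x)^1*y^6*(1-y)^0) by (apply Rmult_le_pos; [apply Rmult_le_pos; [apply Rmult_le_pos|]|]; apply pow_le; lra).
assert (0 <= x^4*(1-x)^0*y^0*(1-y)^6) by (apply Rmult_le_pos; [apply Rmult_le_pos; [apply Rmult_le_pos|]|]; apply pow_le; lra).
assert (0 <= x^4*(1-x)^0*y^1*(1-y)^5) by (apply Rmult_le_pos; [apply Rmult_le_pos; [apply Rmult_le_pos|]|]; apply pow_le; lra).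
assert (0 <= x^4*(1-x)^0*y^2*(1-y)^4) by (apply Rmult_le_pos; [apply Rmult_le_pos; [apply Rmult_le_pos|]|]; apply pow_le; lra).
assert (0 <= x^4*(1-x)^0*y^3*(1-y)^3) by (apply Rmult_le_pos; [apply Rmult_le_pos; [apply Rmult_le_pos|]|]; apply pow_le; lra).
assert (0 <= x^4*(1-x)^0*y^4*(1-y)^2) by (apply Rmult_le_pos; [apply Rmult_le_pos; [apply Rmult_le_pos|]|]; apply pow_le; lra).
assert (0 <= x^4*(1-x)^0*y^5*(1-y)^1) by (apply Rmult_le_pos; [apply Rmult_le_pos; [apply Rmult_le_pos|]|]; apply pow_le; lra).
assert (0 <= x^4*(1-x)^0*y^6*(1-y)^0) by (apply Rmult_le_pos; [apply Rmult_le_pos; [apply Rmult_le_pos|]|]; apply pow_le; lra).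
lra. Qed.
Lemma Lc0 (x y : R) : 0 <= x <= 1 -> 0 <= y <= 1 ->
  2*(19/50+31/50*y)*(2+x*(19/50+31/50*y)-x^2)^2*((19/50+31/50*y)-x+43/64*(x+(19/50+31/50*y))) - 21/4*(1-x^2)*(1+x*(19/50+31/50*y)) - 13/10*((19/50+31/50*y)^2*(x+(19/50+31/50*y))^2-(1-x^2)*(2+x*(19/50+31/50*y)-(19/50+31/50*y)^2)^2) >= 0.
Proof. intros Hx Hy.
assert (0 <= x^0*(1-x)^5*y^0*(1-y)^4) by (apply Rmult_le_pos; [apply Rmult_le_pos; [apply Rmult_le_pos|]|]; apply pow_le; lra).
assert (0 <= x^0*(1-x)^5*y^1*(1-y)^3) by (apply Rmult_le_pos; [apply Rmult_le_pos; [apply Rmult_le_pos|]|]; apply pow_le; lra).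
assert (0 <= x^0*(1-x)^5*y^2*(1-y)^2) by (apply Rmult_le_pos; [apply Rmult_le_pos; [apply Rmult_le_pos|]|]; apply pow_le; lra).
assert (0 <= x^0*(1-x)^5*y^3*(1-y)^1) by (apply Rmult_le_pos; [apply Rmult_le_pos; [apply Rmult_le_pos|]|]; apply pow_le; lra).
assert (0 <= x^0*(1-x)^5*y^4*(1-y)^0) by (apply Rmult_le_pos; [apply Rmult_le_pos; [apply Rmult_le_pos|]|]; apply pow_le; lra).
assert (0 <= x^1*(1-x)^4*y^0*(1-y)^4) by (apply Rmult_le_pos; [apply Rmult_le_pos; [apply Rmult_le_pos|]|]; apply pow_le; lra).
assert (0 <= x^1*(1-x)^4*y^1*(1-y)^3) by (apply Rmult_le_pos; [apply Rmult_le_pos; [apply Rmult_le_pos|]|]; apply pow_le; lra).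
assert (0 <= x^1*(1-x)^4*y^2*(1-y)^2) by (apply Rmult_le_pos; [apply Rmult_le_pos; [apply Rmult_le_pos|]|]; apply pow_le; lra).
assert (0 <= x^1*(1-x)^4*y^3*(1-y)^1) by (apply Rmult_le_pos; [apply Rmult_le_pos; [apply Rmult_le_pos|]|]; apply pow_le; lra).
assert (0 <= x^1*(1-x)^4*y^4*(1-y)^0) by (apply Rmult_le_pos; [apply Rmult_le_pos; [apply Rmult_le_pos|]|]; apply pow_le; lra).
assert (0 <= x^2*(1-x)^3*y^0*(1-y)^4) by (apply Rmult_le_pos; [apply Rmult_le_pos; [apply Rmult_le_pos|]|]; apply pow_le; lra).
assert (0 <= x^2*(1-x)^3*y^1*(1-y)^3) by (apply Rmult_le_pos; [apply Rmult_le_pos; [apply Rmult_le_pos|]|]; apply pow_le; lra).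
assert (0 <= x^2*(1-x)^3*y^2*(1-y)^2) by (apply Rmult_le_pos; [apply Rmult_le_pos; [apply Rmult_le_pos|]|]; apply pow_le; lra).
assert (0 <= x^2*(1-x)^3*y^3*(1-y)^1) by (apply Rmult_le_pos; [apply Rmult_le_pos; [apply Rmult_le_pos|]|]; apply pow_le; lra).
assert (0 <= x^2*(1-x)^3*y^4*(1-y)^0) by (apply Rmult_le_pos; [apply Rmult_le_pos; [apply Rmult_le_pos|]|]; apply pow_le; lra).
assert (0 <= x^3*(1-x)^2*y^0*(1-y)^4) by (apply Rmult_le_pos; [apply Rmult_le_pos; [apply Rmult_le_pos|]|]; apply pow_le; lra).
assert (0 <= x^3*(1-x)^2*y^1*(1-y)^3) by (apply Rmult_le_pos; [apply Rmult_le_pos; [apply Rmult_le_pos|]|]; apply pow_le; lra).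
assert (0 <= x^3*(1-x)^2*y^2*(1-y)^2) by (apply Rmult_le_pos; [apply Rmult_le_pos; [apply Rmult_le_pos|]|]; apply pow_le; lra).
assert (0 <= x^3*(1-x)^2*y^3*(1-y)^1) by (apply Rmult_le_pos; [apply Rmult_le_pos; [apply Rmult_le_pos|]|]; apply pow_le; lra).
assert (0 <= x^3*(1-x)^2*y^4*(1-y)^0) by (apply Rmult_le_pos; [apply Rmult_le_pos; [apply Rmult_le_pos|]|]; apply pow_le; lra).
assert (0 <= x^4*(1-x)^1*y^0*(1-y)^4) by (apply Rmult_le_pos; [apply Rmult_le_pos; [apply Rmult_le_pos|]|]; apply pow_le; lra).
assert (0 <= x^4*(1-x)^1*y^1*(1-y)^3) by (apply Rmult_le_pos; [apply Rmult_le_pos; [apply Rmult_le_pos|]|]; apply pow_le; lra).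
assert (0 <= x^4*(1-x)^1*y^2*(1-y)^2) by (apply Rmult_le_pos; [apply Rmult_le_pos; [apply Rmult_le_pos|]|]; apply pow_le; lra).
assert (0 <= x^4*(1-x)^1*y^3*(1-y)^1) by (apply Rmult_le_pos; [apply Rmult_le_pos; [apply Rmult_le_pos|]|]; apply pow_le; lra).
assert (0 <= x^4*(1-x)^1*y^4*(1-y)^0) by (apply Rmult_le_pos; [apply Rmult_le_pos; [apply Rmult_le_pos|]|]; apply pow_le; lra).
assert (0 <= x^5*(1-x)^0*y^0*(1-y)^4) by (apply Rmult_le_pos; [apply Rmult_le_pos; [apply Rmult_le_pos|]|]; apply pow_le; lra).
assert (0 <= x^5*(1-x)^0*y^1*(1-y)^3) by (apply Rmult_le_pos; [apply Rmult_le_pos; [apply Rmult_le_pos|]|]; apply pow_le; lra).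
assert (0 <= x^5*(1-x)^0*y^2*(1-y)^2) by (apply Rmult_le_pos; [apply Rmult_le_pos; [apply Rmult_le_pos|]|]; apply pow_le; lra).
assert (0 <= x^5*(1-x)^0*y^3*(1-y)^1) by (apply Rmult_le_pos; [apply Rmult_le_pos; [apply Rmult_le_pos|]|]; apply pow_le; lra).
assert (0 <= x^5*(1-x)^0*y^4*(1-y)^0) by (apply Rmult_le_pos; [apply Rmult_le_pos; [apply Rmult_le_pos|]|]; apply pow_le; lra).
lra. Qed.
Lemma frac_nonneg (a b : R) : 0 <= a -> 0 < b -> 0 <= a / b.
Proof. intros. unfold Rdiv. apply Rmult_le_pos; [lra|]. left; apply Rinv_0_lt_compat; lra. Qed.

Lemma B0_imp (A B : R) : 0 < A <= 1 -> 0 < B <= 1 -> B >= B0 A ->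
  kappa A * (2 + A*B - B^2) <= B * (A + B).
Proof.
  intros [HA0 HA1] [HB0 HB1] HBB.
  unfold B0 in HBB.
  set (k := kappa A) in *.
  assert (Hk0 : 0 <= k) by apply sqrt_pos.
  assert (Hk2 : k * k = 1 - A^2) by (apply sqrt_sqrt; nra).
  assert (Hk1 : k <= 1) by nra.
  set (Dq := sqrt (A ^ 2 * (1 - k) ^ 2 + 8 * k * (1 + k))) in *.
  assert (HDq0 : 0 <= Dq) by apply sqrt_pos.
  assert (HDq2 : Dq * Dq = A ^ 2 * (1 - k) ^ 2 + 8 * k * (1 + k)).
  { apply sqrt_sqrt. assert (0 <= A^2 * (1-k)^2) by (apply Rmult_le_pos; apply pow2_ge_0). nra. }
  assert (H1 : -A*(1-k)+Dq <= 2*(1+k)*B).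
  { set (T := (- A * (1 - k) + Dq) / (2 * (1 + k))) in *.
    assert (Heq: -A*(1-k)+Dq = T*(2*(1+k))) by (unfold T; field; lra).
    assert (0 <= (B - T)*(2*(1+k))) by (apply Rmult_le_pos; lra). lra. }
  clear HBB.
  assert (H3 : Dq*Dq <= (2*(1+k)*B + A*(1-k))*(2*(1+k)*B + A*(1-k))).
  { apply Rmult_le_compat; try lra. }
  assert (H4 : 8*k*(1+k) <= 4*(1+k)*((1+k)*B^2 + A*B*(1-k))) by nra.
  assert (H2 : 2*k <= (1+k)*B^2 + A*B*(1-k)).
  { apply Rmult_le_reg_l with (4*(1+k)); [lra|]. lra. }
  lra.
Qed.

Theorem mainTheorem8 (A B : R) :
  0 < A <= 1 -> 0 < B <= 1 -> B >= B0 A ->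
  let C := 2 + A*B - A^2 in
  let sigma := sqrt (2 * (1 + A*B)) in
  let xs := sigma / (2 * B * C) in
  let Us := Pf A B - xs in
  Us >= 1/2 /\ (Us < Rf A B -> G A B Us >= 0).
Proof.
  intros HA HB HBB. cbv zeta.
  pose proof (B0_imp A B HA HB HBB) as Hkd. clear HBB.
  destruct HA as [HA0 HA1], HB as [HB0 HB1].
  set (k := kappa A) in *.
  assert (Hk0 : 0 <= k) by apply sqrt_pos.
  assert (Hk2 : k * k = 1 - A^2) by (apply sqrt_sqrt; nra).
  set (D := 2 + A*B - B^2) in *.
  assert (HDd : D = 2 + A*B - B^2) by reflexivity.
  assert (HD1 : 1 <= D) by nra.
  set (C := 2 + A*B - A^2).
  assert (HCd : C = 2 + A*B - A^2) by reflexivity.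
  assert (HC1 : 1 <= C) by nra.
  set (s := sqrt (2 * (1 + A*B))).
  assert (Hs0 : 0 <= s) by apply sqrt_pos.
  assert (Hs2 : s * s = 2 * (1 + A*B)) by (apply sqrt_sqrt; nra).
  assert (Hsu : 2 * s <= 3 + A*B).
  { destruct (Rle_lt_dec (2*s) (3+A*B)) as [h|h]; [exact h|]. exfalso.
    assert (0 < (2*s - (3+A*B))*(2*s + (3+A*B))) by (apply Rmult_lt_0_compat; nra).
    assert (0 <= (1-A*B)^2) by apply pow2_ge_0. lra. }
  assert (La : 2*C*D - (3+A*B)*(A+B) >= 0) by (rewrite HCd, HDd; apply La0; lra).
  set (Us := Pf A B - s / (2 * B * C)).
  assert (HAB : 0 < A + B) by lra.
  assert (HBC : 0 < B * C) by nra.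
  assert (Hu : Us - 1/2 = (2*C*D - 2*s*(A+B))/(4*B*C*(A+B))).
  { unfold Us, Pf. rewrite HCd, HDd. field. repeat split; nra. }
  assert (Hu0 : 0 <= Us - 1/2).
  { rewrite Hu. apply frac_nonneg; [nra|]. nra. }
  split; [lra|].
  intro HR.
  unfold Rf in HR. fold k in HR.
  set (e := eps B) in *.
  assert (He0 : 0 <= e) by apply sqrt_pos.
  assert (HU1 : Us < 1).
  { set (X := 1 - e * k ^ 2 / (A * (A + B))) in HR.
    assert (HX : X <= 1).
    { unfold X. assert (0 <= e * k^2 / (A*(A+B))).
      { apply frac_nonneg; [apply Rmult_le_pos; [lra| apply pow2_ge_0] | nra]. }
      lra. }
    assert (Heq : X / (1+e) * (1+e) = X) by (field; lra).
    set (Y := X/(1+e)) in *. nra. }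
  assert (HB38 : 19/50 <= B).
  { destruct (Rle_lt_dec (19/50) B) as [h|h]; [exact h|]. exfalso.
    assert (Hv : Us - 1 = (2*C*(1-B^2) - s*(A+B))/(2*B*C*(A+B))).
    { unfold Us, Pf. rewrite HCd. field. repeat split; nra. }
    assert (Hneg : 2*C*(1-B^2) - s*(A+B) < 0).
    { destruct (Rle_lt_dec 0 (2*C*(1-B^2) - s*(A+B))) as [h2|h2]; [|exact h2].
      assert (0 <= (2*C*(1-B^2) - s*(A+B))/(2*B*C*(A+B))) by (apply frac_nonneg; nra). lra. }
    assert (HE : 4*C^2*(1-B^2)^2 - 2*(1+A*B)*(A+B)^2 >= 0).
    { pose proof (LE0 A (50/19*B)) as HE.
      replace (19/50*(50/19*B)) with B in HE by field.
      rewrite HCd. apply HE; lra. }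
    assert (Hp : 0 <= 2*C*(1-B^2)) by nra.
    assert (Hsq : (2*C*(1-B^2))*(2*C*(1-B^2)) < (s*(A+B))*(s*(A+B))).
    { apply Rmult_le_0_lt_compat; lra. }
    assert (Hss : s*(A+B)*(s*(A+B)) = 2*(1+A*B)*(A+B)^2).
    { replace (s*(A+B)*(s*(A+B))) with ((s*s)*(A+B)^2) by ring. rewrite Hs2. ring. }
    lra. }
  set (m := k * (s / (2*B*C))).
  assert (HM : Mf A B Us = m) by (unfold Mf, m, Us; fold k; ring).
  assert (Hks : k * s <= B * C).
  { assert (h1 : k*D*s <= B*(A+B)*s) by (apply Rmult_le_compat_r; lra).
    assert (h2 : B*(A+B)*(2*s) <= B*(A+B)*(3+A*B)) by (apply Rmult_le_compat_l; nra).
    assert (h3 : B*((A+B)*(3+A*B)) <= B*(2*C*D)) by (apply Rmult_le_compat_l; lra).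
    assert (h4 : k*s*D <= B*C*D) by lra.
    apply Rmult_le_reg_r with D; lra. }
  assert (Hm2BC : m * (2*B*C) = k*s) by (unfold m; field; lra).
  assert (Hm0 : 0 <= m) by (unfold m; apply Rmult_le_pos; [lra| apply frac_nonneg; nra]).
  assert (Hm1 : m <= 1/2) by nra.
  assert (Hmm : B*(m*m) = (1-A^2)*(1+A*B)/(2*B*C^2)).
  { replace (B*(m*m)) with ((k*k)*(s*s)/(4*B*C^2)) by (unfold m; field; lra).
    rewrite Hk2, Hs2. field. lra. }
  assert (Hpl : 3 <= PI) by apply PI_lb.
  assert (Hph : PI <= 68/21) by apply PI_ub.
  assert (Hpi2 : PI*PI <= 21/2) by nra.
  assert (Hcm : 1 - (PI*m)^2/2 <= cos (PI*m)) by (apply cos_ge; nra).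
  assert (Hcm' : B*(1 - 21/4*(m*m)) <= B*cos (PI*m)).
  { apply Rmult_le_compat_l; [lra|].
    assert (PI*PI*(m*m) <= 21/2*(m*m)) by (apply Rmult_le_compat_r; nra). nra. }
  assert (HcN : A * cos (PI * Nf A B Us) <= A).
  { pose proof (COS_bound (PI * Nf A B Us)). nra. }
  set (u := Us - 1/2) in *.
  assert (Hcu : cos (PI * Us) = - sin (PI * u)).
  { replace (PI*Us) with (PI/2 + PI*u) by (unfold u; field). rewrite cos_plus, cos_PI2, sin_PI2. ring. }
  unfold G. rewrite HM, Hcu.
  destruct (Rle_lt_dec u (1/4)) as [Hq|Hq].
  -
    assert (Hsn : PI*u - (PI*u)^3/6 <= sin (PI*u)) by (apply sin_ge; nra).
    assert (h1 : PI*PI*(u*u) <= 21/32).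
    { assert (u*u <= 1/16) by nra. nra. }
    assert (h2 : (PI*u)^3 <= (PI*u)*(21/32)).
    { replace ((PI*u)^3) with ((PI*u)*(PI*PI*(u*u))) by ring. apply Rmult_le_compat_l; nra. }
    assert (Hs1 : 171/64*u <= sin (PI*u)) by nra.
    assert (Hs1' : (A+B)*(171/64*u) <= (A+B)*sin (PI*u)) by (apply Rmult_le_compat_l; lra).
    set (W := (2*C*D - (3+A*B)*(A+B))/(4*B*C)).
    assert (HW : W <= (A+B)*u).
    { assert (Heq : (A+B)*u - W = (A+B)*(3+A*B-2*s)/(4*B*C)).
      { rewrite Hu. unfold W. field. repeat split; lra. }
      assert (0 <= (A+B)*(3+A*B-2*s)/(4*B*C)) by (apply frac_nonneg; nra). lra. }
    assert (HPb : 0 <= (4*B*C^2*(B-A) - 21/2*(1-A^2)*(1+A*B) + 171/64*C*(2*C*D-(3+A*B)*(A+B)))/(4*B*C^2)).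
    { apply frac_nonneg; [|nra]. rewrite HCd, HDd. pose proof (Lb0 A B). lra. }
    assert (Hid : (4*B*C^2*(B-A) - 21/2*(1-A^2)*(1+A*B) + 171/64*C*(2*C*D-(3+A*B)*(A+B)))/(4*B*C^2)
       = B - A - 21/4*(B*(m*m)) + 171/64*W).
    { rewrite Hmm. unfold W. field. lra. }
    lra.
  -
    assert (Hsh : sin (PI*u) = cos (PI*(1/2-u))).
    { rewrite <- cos_shift. f_equal. field. }
    assert (Hu1 : u < 1/2) by (unfold u; lra).
    assert (Hc2 : 1 - (PI*(1/2-u))^2/2 <= cos (PI*(1/2-u))) by (apply cos_ge; nra).
    assert (h1 : PI*PI*((1/2-u)*(1/2-u)) <= 21/32).
    { assert ((1/2-u)*(1/2-u) <= 1/16) by nra. nra. }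
    assert (Hs1 : 43/64 <= sin (PI*u)) by nra.
    assert (Hs1' : (A+B)*(43/64) <= (A+B)*sin (PI*u)) by (apply Rmult_le_compat_l; lra).
    assert (Hhs : 0 <= B^2*(A+B)^2 - (1-A^2)*D^2).
    { assert (0 <= k*D) by nra.
      assert ((k*D)*(k*D) <= (B*(A+B))*(B*(A+B))) by (apply Rmult_le_compat; lra).
      assert ((k*D)*(k*D) = (k*k)*D^2) by ring. rewrite Hk2 in *. nra. }
    assert (HPc : 0 <= (2*B*C^2*(B-A+43/64*(A+B)) - 21/4*(1-A^2)*(1+A*B))/(2*B*C^2)).
    { apply frac_nonneg; [|nra].
      pose proof (Lc0 A (50/31*(B-19/50))) as HL.
      replace (19/50 + 31/50*(50/31*(B-19/50))) with B in HL by field.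
      rewrite HCd. rewrite HDd in Hhs. assert (HL' := HL ltac:(lra) ltac:(lra)). nra. }
    assert (Hid : (2*B*C^2*(B-A+43/64*(A+B)) - 21/4*(1-A^2)*(1+A*B))/(2*B*C^2)
       = B - A - 21/4*(B*(m*m)) + 43/64*(A+B)).
    { rewrite Hmm. field. lra. }
    lra.
Qed.
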